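(* Let $\mathcal{I}$ be any instance of vertex cover on $n$ vertices. Consider a partial branch-and-bound tree $\mathcal{TP}_S$ generated by strong-branching with the product score function and the worst-bound node selection rule with ties broken by selecting a node of largest depth. Let $N$ be a node of this tree that is not pruned, let $j\in I(\mathcal{I},N)$, and suppose that strong-branching decides to branch on $x_j$ at $N$. Then (1) $\mathcal{TP}_S^B(\mathcal{I})=\mathrm{OPT}(\mathcal{I})$; and (2) after branching on $x_j$, only $\mathcal{O}(n)$ further branchings are needed to find an integral optimal solution of $\mathcal{I}$.
   Context: Vertex cover IP for a graph $G=(V,E)$, $n=|V|$: minimize $\sum_{v} x_v$ subject to $x_u+x_v\ge 1$ ($uv\in E$), $x\in\{0,1\}^V$; LP relaxation uses $x\in[0,1]^V$; $\mathrm{OPT}(\mathcal{I})$ is the IP optimal value. Branch-and-bound: each node $N$ is the LP relaxation plus constraints $x_j=0$ or $x_j=1$ for variables fixed on the path from the root; branching on $x_j$ at $N$ creates children with $x_j=0$ and $x_j=1$ added. The LP solver returns some optimal solution of each node LP. A node is pruned if its LP is infeasible, or the returned solution is integral, or its LP value is strictly larger than the value of an integral solution already found. Worst-bound node selection: process an open node of smallest LP value. Strong branching with product score: at node $N$ with LP value $z$ and returned solution $\hat x$, for each $j$ with $\hat x_j$ fractional let $z^0_j,z^1_j$ be the optimal LP values of the children ($+\infty$ if infeasible), $\Delta^-_j=z^0_j-z$, $\Delta^+_j=z^1_j-z$, $\mathrm{score}_P(j)=\Delta^+_j\Delta^-_j$ with $0\cdot\infty=0$; branch on a maximizer. $I(\mathcal{I},N)$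 (the maximal set of integer variables at $N$) is the union, over all optimal solutions $x$ of the LP at node $N$, of the sets $\{j: x_j\in\{0,1\}\}$. A partial tree is a tree produced by this procedure before termination; its dual bound $\mathcal{TP}_S^B(\mathcal{I})$ is the minimum LP value over its unpruned (open) leaves. *)

(* Defs.v *)
From HB Require Import structures.
From mathcomp Require Import all_boot all_order all_algebra.
From mathcomp Require Import classical_sets reals constructive_ereal ereal.
Set Implicit Arguments. Unset Strict Implicit. Unset Printing Implicit Defensive.
Import Order.TTheory GRing.Theory Num.Theory.
Local Open Scope classical_set_scope.
Local Open Scope ring_scope.

Section VC.
Variables (R : realType) (n : nat) (E : rel 'I_n).

(* A branch-and-bound vc_node = the list of fixings (x_j = b) on the path from
   the root (most recent first); its depth is its size. *)
Definition vc_node := seq ('I_n * bool).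
Definition vc_point := 'I_n -> R.

Definition obj (x : vc_point) : R := \sum_(i < n) x i.

Definition feasible (p : vc_node) (x : vc_point) : Prop :=
  (forall i, 0 <= x i <= 1) /\
  (forall u v, E u v -> 1 <= x u + x v) /\
  (forall jb, jb \in p -> x jb.1 = (if jb.2 then 1 else 0)).

Definition integral (x : vc_point) : Prop := forall i, x i = 0 \/ x i = 1.

(* Optimal LP value at vc_node p (+oo if the LP is infeasible). *)
Definition lpval (p : vc_node) : \bar R :=
  ereal_inf [set (obj x)%:E | x in [set x | feasible p x]].

Definition lp_opt (p : vc_node) (x : vc_point) : Prop :=
  feasible p x /\ forall y, feasible p y -> obj x <= obj y.

Definition OPT : \bar R :=
  ereal_inf [set (obj x)%:E | x in [set x | feasible [::] x /\ integral x]].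

Definition in_I (N : vc_node) (j : 'I_n) : Prop :=
  exists x, lp_opt N x /\ (x j = 0 \/ x j = 1).

Definition fractional (x : vc_point) (j : 'I_n) : Prop := 0 < x j < 1.

(* Product score of strong branching (0 * +oo = 0 in \bar R). *)
Definition score (p : vc_node) (k : 'I_n) : \bar R :=
  ((lpval ((k, true) :: p) - lpval p) * (lpval ((k, false) :: p) - lpval p))%E.

Definition sb_choice (p : vc_node) (x : vc_point) (j : 'I_n) : Prop :=
  fractional x j /\ forall k, fractional x k -> (score p k <= score p j)%E.

Record bb_state := BBState {
  bb_open : seq vc_node;
  bb_inc : \bar R;
  bb_nbr : nat }.

Definition bb_init : bb_state := BBState [:: [::]] +oo%E 0.

Definition selectable (S : bb_state) (p : vc_node) : Prop :=
  p \in bb_open S /\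
  forall q, q \in bb_open S ->
    (lpval p <= lpval q)%E /\ (lpval q = lpval p -> (size q <= size p)%N).

Definition branch_at (S : bb_state) (N : vc_node) (x : vc_point) (j : 'I_n)
    (S' : bb_state) : Prop :=
  selectable S N /\ lp_opt N x /\ ~ integral x /\
  (lpval N <= bb_inc S)%E /\ sb_choice N x j /\
  S' = BBState (((j, false) :: N) :: ((j, true) :: N) :: rem N (bb_open S))
               (bb_inc S) (bb_nbr S).+1.

Inductive bb_step : bb_state -> bb_state -> Prop :=
| step_infeasible S p :
    selectable S p -> lpval p = +oo%E ->
    bb_step S (BBState (rem p (bb_open S)) (bb_inc S) (bb_nbr S))
| step_integral S p x :
    selectable S p -> lp_opt p x -> integral x ->
    bb_step S (BBState (rem p (bb_open S))
                       (Order.min (bb_inc S) (obj x)%:E) (bb_nbr S))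
| step_bound S p x :
    selectable S p -> lp_opt p x -> ~ integral x -> (bb_inc S < lpval p)%E ->
    bb_step S (BBState (rem p (bb_open S)) (bb_inc S) (bb_nbr S))
| step_branch S p x j S' :
    branch_at S p x j S' -> bb_step S S'.

Inductive bb_reach : bb_state -> bb_state -> Prop :=
| reach_refl S : bb_reach S S
| reach_step S1 S2 S3 : bb_step S1 S2 -> bb_reach S2 S3 -> bb_reach S1 S3.

Definition dual_bound (S : bb_state) : \bar R :=
  \big[Order.min/+oo%E]_(p <- bb_open S) lpval p.

End VC.

(* Main.v *)
Require Import Defs.
From HB Require Import structures.
From mathcomp Require Import all_boot all_order all_algebra.
From mathcomp Require Import classical_sets reals constructive_ereal ereal boolp.
From mathcomp Require Import lra zify.
Set Implicit Arguments. Unset Strict Implicit. Unset Printing Implicit Defensive.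
Import Order.TTheory GRing.Theory Num.Theory.
Local Open Scope ring_scope.

Section LP.
Variables (R : realType) (n : nat) (E : rel 'I_n).
Local Notation feas := (@feasible R n E).
Local Notation lpv := (@lpval R n E).

Lemma feas_cons p jb (y : vc_point R n) : feas (jb :: p) y -> feas p y.
Proof.
case=> h1 [h2 h3]; split=> //; split=> // kb kin; apply: h3.
by rewrite inE kin orbT.
Qed.

Lemma feas_nil p (y : vc_point R n) : feas p y -> feas [::] y.
Proof. by case=> h1 [h2 _]; split=> //; split. Qed.

Lemma feas_consI p k (b : bool) (y : vc_point R n) :
  feas p y -> y k = (if b then 1 else 0) -> feas ((k, b) :: p) y.
Proof.
case=> h1 [h2 h3] hk; split=> //; split=> // kb; rewrite inE => /orP[/eqP->//|].
exact: h3.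
Qed.

Lemma lpval_le p y : feas p y -> (lpv p <= (obj y)%:E)%E.
Proof. by move=> fy; apply: ereal_inf_lbound; exists y. Qed.

Lemma lpval_ge p a : (forall y, feas p y -> (a <= (obj y)%:E)%E) -> (a <= lpv p)%E.
Proof. by move=> h; apply/ereal_infP => _ [y fy <-]; exact: h. Qed.

Lemma lpval_opt p y : lp_opt E p y -> lpv p = (obj y)%:E.
Proof.
case=> fy hy; apply/eqP; rewrite eq_le lpval_le //=.
by apply: lpval_ge => y' /hy; rewrite lee_fin.
Qed.

Lemma lpval_mono p jb : (lpv p <= lpv (jb :: p))%E.
Proof. by apply: lpval_ge => y /feas_cons; exact: lpval_le. Qed.

Lemma lpval_inf p : (forall y, ~ feas p y) -> lpv p = +oo%E.
Proof.
by move=> h; apply/ereal_inf_pinfty => e [y fy _]; case: (h y).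
Qed.

End LP.

Section Round.
Variables (R : realType).

Definition badb (r : R) : bool := [&& r != 0, r != 2^-1 & r != 1].

Definition cls (x y t : R) : Prop :=
  (2^-1 < x /\ x < 1 /\ y = x + t /\ 2^-1 <= y /\ y <= 1) \/
  (0 < x /\ x < 2^-1 /\ y = x - t /\ 0 <= y /\ y <= 2^-1) \/
  (y = x /\ (x = 0 \/ x = 2^-1 \/ x = 1)).

Lemma edge_ok (xu xv yu yv t : R) : 1 <= xu + xv ->
  cls xu yu t -> cls xv yv t -> 1 <= yu + yv.
Proof.
move=> h [[a [b [c [d e]]]]|[[a [b [c [d e]]]]|[a [b|[b|b]]]]]
  [[a' [b' [c' [d' e']]]]|[[a' [b' [c' [d' e']]]]|[a' [b'|[b'|b']]]]]; lra.
Qed.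

Lemma nbad_cls (r : R) : ~~ badb r -> r = 0 \/ r = 2^-1 \/ r = 1.
Proof.
rewrite /badb negb_and !negbK => /orP[/eqP->|]; first by left.
by rewrite negb_and !negbK => /orP[/eqP->|/eqP->]; right; [left|right].
Qed.

Lemma bad_cls (r : R) : 0 <= r <= 1 -> badb r ->
  (2^-1 < r < 1) || (0 < r < 2^-1).
Proof.
move=> /andP[h0 h1] /and3P[/eqP a /eqP b /eqP c].
have [h|h|h] := ltgtP r 2^-1.
- apply/orP; right; apply/andP; split=> //; rewrite lt_neqAle h0 andbT.
  by apply/eqP => e; apply: a.
- apply/orP; left; apply/andP; split=> //; rewrite lt_neqAle h1 andbT.
  by apply/eqP.
- by case: b.
Qed.

Lemma vp_bad (r : R) : 2^-1 < r < 1 -> badb r.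
Proof. move=> /andP[a b]; rewrite /badb; apply/and3P; split; apply/eqP; lra. Qed.
Lemma vm_bad (r : R) : 0 < r < 2^-1 -> badb r.
Proof. move=> /andP[a b]; rewrite /badb; apply/and3P; split; apply/eqP; lra. Qed.

Variables (n : nat) (E : rel 'I_n).
Local Notation feas := (@feasible R n E).

Definition vpb (r : R) := 2^-1 < r < 1.
Definition vmb (r : R) := 0 < r < 2^-1.
Definition dirf (r : R) : R := if vpb r then 1 else if vmb r then -1 else 0.
Definition roomf (up : bool) (r : R) : R :=
  if up then (if vpb r then 1 - r else r)
  else (if vpb r then r - 2^-1 else 2^-1 - r).

Lemma round_step p (x : vc_point R n) i0 : feas p x -> badb (x i0) ->
  exists x' : vc_point R n, feas p x' /\ obj x' <= obj x /\
    (forall i, ~~ badb (x i) -> x' i = x i) /\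
    (#|[pred i | badb (x' i)]| < #|[pred i | badb (x i)]|)%N.
Proof.
move=> fx bi0; have [box [edg hfx]] := fx.
pose a := \sum_i dirf (x i).
suff gen : forall up : bool, (if up then a <= 0 else 0 < a) ->
  exists x' : vc_point R n, feas p x' /\ obj x' <= obj x /\
    (forall i, ~~ badb (x i) -> x' i = x i) /\
    (#|[pred i | badb (x' i)]| < #|[pred i | badb (x i)]|)%N.
  case: (boolP (a <= 0)) => h; first exact: (gen true).
  by apply: (gen false); rewrite ltNge.
move=> up hup.
have [i1 bi1 mini1] : exists2 i1, badb (x i1) &
    forall i, badb (x i) -> roomf up (x i1) <= roomf up (x i).
  by case: (@arg_minP _ R _ i0 (fun i => badb (x i)) (fun i => roomf up (x i)) bi0) => i bi m; exists i.
have vpm i : badb (x i) -> vpb (x i) || vmb (x i) by move=> b; apply: bad_cls.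
have room_pos i : badb (x i) -> 0 < roomf up (x i).
  move/vpm => /orP[hv|hv].
  - move: (hv); rewrite /vpb => /andP[h1 h2]; rewrite /roomf hv.
    by destruct up; lra.
  - have hv' : vpb (x i) = false.
      by apply/negP => hp; move: hp hv; rewrite /vpb /vmb => /andP[? ?] /andP[? ?]; lra.
    move: hv; rewrite /vmb => /andP[h1 h2]; rewrite /roomf hv'.
    by destruct up; lra.
have [eps epsdef] : exists eps, eps = roomf up (x i1) by exists (roomf up (x i1)).
have eps_pos : 0 < eps by rewrite epsdef; apply: room_pos.
have [t tdef] : exists t : R, t = if up then eps else - eps by exists (if up then eps else - eps).
pose x' i := x i + t * dirf (x i).
have hcls i : cls (x i) (x' i) t.
  rewrite /cls /x' /dirf.
  case hp: (vpb (x i)); [left | case hm: (vmb (x i)); [right; left | right; right]].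
  - have := mini1 _ (vp_bad hp); rewrite -epsdef /roomf hp.
    move: hp; rewrite /vpb => /andP[h1 h2].
    destruct up => h; rewrite mulr1 tdef; do !split => //; lra.
  - have := mini1 _ (vm_bad hm); rewrite -epsdef /roomf hp.
    move: hm; rewrite /vmb => /andP[h1 h2].
    destruct up => h; rewrite mulrN1 tdef; do !split => //; lra.
  - rewrite mulr0 addr0; split => //; apply: nbad_cls.
    by apply/negP => /vpm; rewrite hp hm.
have unch i : ~~ badb (x i) -> x' i = x i.
  move=> nb; rewrite /x' /dirf.
  have -> : vpb (x i) = false by apply/negP => /vp_bad; apply/negP.
  have -> : vmb (x i) = false by apply/negP => /vm_bad; apply/negP.
  by rewrite mulr0 addr0.
exists x'; split; [split; [|split]|split; [|split]].
- move=> i; have := box i; case: (hcls i) =>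
    [[? [? [? [? ?]]]]|[[? [? [? [? ?]]]]|[h _]]].
  + by move=> _; apply/andP; split; lra.
  + by move=> _; apply/andP; split; lra.
  + by rewrite h.
- move=> u v /edg h; exact: edge_ok h (hcls u) (hcls v).
- move=> jb /hfx h; rewrite unch // h /badb.
  by case: jb.2; rewrite ?eqxx ?andbF.
- have -> : obj x' = obj x + t * a.
    by rewrite /obj /x' big_split /= -mulr_sumr.
  suff : t * a <= 0 by lra.
  rewrite tdef; destruct up.
  + by rewrite mulr_ge0_le0 // ltW.
  + by rewrite mulNr oppr_le0 mulr_ge0 // ltW.
- exact: unch.
- rewrite [X in (_ < X)%N](cardD1 i1) inE bi1 add1n ltnS.
  apply/subset_leq_card/fintype.subsetP => i; rewrite !inE => bi'.
  have bi : badb (x i).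
    by apply/negPn/negP => nb; move: bi'; rewrite unch //; apply/negP.
  rewrite bi andbT; apply/eqP => ei; move: bi'; rewrite ei.
  have hx1 : x' i1 = 0 \/ x' i1 = 2^-1 \/ x' i1 = 1.
    have := mini1 _ bi1; have := vpm _ bi1.
    rewrite /x' /dirf tdef epsdef /roomf.
    case hp: (vpb (x i1)) => /=.
    + by destruct up => _ _; rewrite mulr1; [right; right | right; left]; lra.
    + case hm: (vmb (x i1)) => //= _ _.
      by destruct up; rewrite mulrN1; [left | right; left]; lra.
  case: hx1 => [->|[->|->]]; rewrite /badb ?eqxx ?andbF //.
Qed.

End Round.

Section Attain.
Variables (R : realType) (n : nat) (E : rel 'I_n).
Local Notation feas := (@feasible R n E).
Local Notation lpv := (@lpval R n E).

Definition hv (r : R) := r = 0 \/ r = 2^-1 \/ r = 1.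
Definition hi (x : vc_point R n) := forall i, hv (x i).

Lemma round_aux k : forall p (x : vc_point R n),
  (#|[pred i | badb (x i)]| <= k)%N -> feas p x ->
  exists h, hi h /\ feas p h /\ obj h <= obj x /\
    (forall i, ~~ badb (x i) -> h i = x i).
Proof.
elim: k => [|k IH] p x hk fx.
  exists x; split; [|split; [|split]] => //.
  move=> i; apply: nbad_cls; apply/negP => bi.
  by move: hk; rewrite leqn0 => /eqP/card0_eq/(_ i); rewrite inE bi.
case: (pickP [pred i | badb (x i)]) => [i0 bi0|none].
  have [x' [fx' [ox' [ux' cx']]]] := round_step fx bi0.
  have [h [hh [fh [oh uh]]]] := IH p x' (leq_trans (ltnSE (leq_trans cx' hk)) (leqnn _)) fx'.
  exists h; split; [|split; [|split]] => //; first by apply: le_trans ox'.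
  move=> i nb; rewrite uh ?ux' //; rewrite ux' //.
exists x; split; [|split; [|split]] => //.
move=> i; apply: nbad_cls; apply/negP => bi; by move: (none i); rewrite inE bi.
Qed.

Lemma round p (x : vc_point R n) : feas p x ->
  exists h, hi h /\ feas p h /\ obj h <= obj x /\
    (forall i, x i = 0 \/ x i = 1 -> h i = x i).
Proof.
move=> fx; have [h [hh [fh [oh uh]]]] := @round_aux _ p x (leqnn _) fx.
exists h; split; [exact: hh|split; [exact: fh|split; [exact: oh|]]].
move=> i hx; apply: uh; rewrite /badb.
by case: hx => ->; rewrite ?eqxx ?andbF.
Qed.

Definition hpt (f : {ffun 'I_n -> 'I_3}) : vc_point R n := fun i => (f i)%:R / 2.

Lemma half_neq0 : (2^-1 == 0 :> R) = false.
Proof. apply/negbTE/eqP => h; have : (0 : R) < 2^-1 by lra. by rewrite h ltxx. Qed.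
Lemma half_neq1 : (2^-1 == 1 :> R) = false.
Proof. apply/negbTE/eqP => h; have : (2^-1 : R) < 1 by lra. by rewrite h ltxx. Qed.

Lemma hi_hpt (x : vc_point R n) : hi x -> exists f, x = hpt f.
Proof.
move=> hx.
exists [ffun i => if x i == 0 then inord 0 else if x i == 1 then inord 2 else inord 1].
apply: funext => i; rewrite /hpt ffunE.
case: (hx i) => [->|[->|->]].
- by rewrite eqxx inordK // mul0r.
- by rewrite half_neq0 half_neq1 inordK // mul1r.
- rewrite oner_eq0 eqxx inordK //; lra.
Qed.

Lemma fin_argmin (T : finType) (P : T -> Prop) (F : T -> R) :
  (exists t, P t) -> exists t, P t /\ forall u, P u -> F t <= F u.
Proof.
case=> t0 pt0.
have pb : `[< P t0 >] by apply/asboolP.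
case: (@arg_minP _ R _ t0 (fun t => `[< P t >]) F pb) => t /asboolP pt m.
by exists t; split => // u pu; apply: m; apply/asboolP.
Qed.

Lemma attain p (x : vc_point R n) : feas p x -> exists y, lp_opt E p y /\ hi y.
Proof.
move=> fx; have [h [hh [fh _]]] := round fx.
have [f0 hf0] := hi_hpt hh.
have [fm [pm mm]] := @fin_argmin _ (fun f => feas p (hpt f)) (fun f => obj (hpt f))
  (ltac:(by exists f0; rewrite -hf0)).
exists (hpt fm); split; last first.
  move=> i; rewrite /hpt; have := ltn_ord (fm i); move: (nat_of_ord (fm i)).
  by case=> [|[|[|m]]] // _; [left; rewrite mul0r|right; left; rewrite mul1r|right; right]; lra.
split=> // y fy.
have [h' [hh' [fh' [oh' _]]]] := round fy.
apply: le_trans oh'.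
have [f' hf'] := hi_hpt hh'; rewrite hf'; apply: mm; by rewrite -hf'.
Qed.

Lemma lpval_feas p (r : R) : lpv p = r%:E -> exists y, feas p y.
Proof.
move=> h; case: (pselect (exists y, feas p y)) => // nh.
by rewrite lpval_inf in h => // y fy; apply: nh; exists y.
Qed.

Lemma child_opt p k (b : bool) (z : R) : lpv p = z%:E ->
  lpv ((k, b) :: p) = z%:E ->
  exists y, lp_opt E p y /\ hi y /\ y k = (if b then 1 else 0).
Proof.
move=> hp hc; have [y0 fy0] := lpval_feas hc.
have [y [[fy oy] hy]] := attain fy0.
have hz : z = obj y.
  by have := lpval_opt (conj fy oy); rewrite hc => -[].
exists y; split; [split|split] => //.
- exact: feas_cons fy.
- by move=> y' fy'; have := lpval_le fy'; rewrite hp lee_fin hz.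
- by have [_ [_ h]] := fy; apply: (h (k, b)); rewrite mem_head.
Qed.

Definition intb (r : R) := (r == 0) || (r == 1).
Definition zc (x y : vc_point R n) : vc_point R n :=
  fun i => if intb (x i) then x i else y i.
Definition pmid (x y : vc_point R n) : vc_point R n :=
  fun i => if x i == y i then x i else 2^-1.

Lemma e01 : (0 == 1 :> R) = false. Proof. by rewrite eq_sym oner_eq0. Qed.
Lemma e10 : (1 == 0 :> R) = false. Proof. by rewrite oner_eq0. Qed.
Lemma e0h : (0 == 2^-1 :> R) = false. Proof. by rewrite eq_sym half_neq0. Qed.
Lemma e1h : (1 == 2^-1 :> R) = false. Proof. by rewrite eq_sym half_neq1. Qed.

Lemma zc_feas p x y : feas p x -> feas p y -> feas p (zc x y).
Proof.
move=> [bx [ex fx]] [by_ [ey fy]]; split; [|split].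
- by move=> i; rewrite /zc; case: ifP => _; [exact: bx | exact: by_].
- move=> u v euv; rewrite /zc.
  have hx := ex _ _ euv; have hy := ey _ _ euv.
  move: (bx u) (bx v) (by_ u) (by_ v) => /andP[? ?] /andP[? ?] /andP[? ?] /andP[? ?].
  case: (boolP (intb (x u))) => iu; case: (boolP (intb (x v))) => iv //=.
  + move: iu iv; rewrite /intb => /orP[/eqP hu|/eqP hu] /norP[/eqP nv0 /eqP nv1]; last lra.
    by exfalso; apply: nv1; lra.
  + move: iv iu; rewrite /intb => /orP[/eqP hu|/eqP hu] /norP[/eqP nv0 /eqP nv1]; last lra.
    by exfalso; apply: nv1; lra.
- move=> jb jbin; rewrite /zc (fx _ jbin).
  by case: jb.2; rewrite /intb eqxx ?orbT.
Qed.

Lemma pm_edge (xu xv yu yv : R) : hv xu -> hv xv -> hv yu -> hv yv ->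
  1 <= xu + xv -> 1 <= yu + yv ->
  1 <= (if xu == yu then xu else 2^-1) + (if xv == yv then xv else 2^-1).
Proof.
by move=> [->|[->|->]] [->|[->|->]] [->|[->|->]] [->|[->|->]];
  rewrite ?eqxx ?e01 ?e10 ?e0h ?e1h ?half_neq0 ?half_neq1 /=; lra.
Qed.

Lemma pmid_feas p x y : hi x -> hi y -> feas p x -> feas p y -> feas p (pmid x y).
Proof.
move=> hx hy [bx [ex fx]] [by_ [ey fy]]; split; [|split].
- move=> i; rewrite /pmid; case: ifP => _; first exact: bx.
  by apply/andP; split; lra.
- move=> u v euv; rewrite /pmid; apply: pm_edge => //; [exact: ex|exact: ey].
- by move=> jb jbin; rewrite /pmid (fx _ jbin) (fy _ jbin) eqxx.
Qed.

Lemma pw (xi yi : R) : hv xi -> hv yi ->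
  (if intb xi then xi else yi) + (if intb yi then yi else xi) +
  2 * (if xi == yi then xi else 2^-1) = 2 * xi + 2 * yi.
Proof.
by move=> [->|[->|->]] [->|[->|->]];
  rewrite /intb ?eqxx ?e01 ?e10 ?e0h ?e1h ?half_neq0 ?half_neq1 /=; lra.
Qed.

Lemma comb p x y : hi x -> hi y -> lp_opt E p x -> lp_opt E p y ->
  lp_opt E p (zc x y) /\ hi (zc x y).
Proof.
move=> hx hy [fx ox] [fy oy]; split; last first.
  by move=> i; rewrite /zc; case: ifP.
split; first exact: zc_feas.
move=> y' fy'.
have hsum : obj (zc x y) + obj (zc y x) + 2 * obj (pmid x y) = 2 * obj x + 2 * obj y.
  rewrite /obj !mulr_sumr -!big_split; apply: eq_bigr => i _; exact: pw.
have := ox _ fy; have := oy _ fx; have := ox _ (zc_feas fy fx).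
have := ox _ (pmid_feas hx hy fx fy); have := ox _ fy'.
lra.
Qed.

Lemma integral_opt p x0 : hi x0 -> lp_opt E p x0 ->
  (forall i, exists y : vc_point R n, hi y /\ lp_opt E p y /\ intb (y i)) ->
  exists u : vc_point R n, integral u /\ lp_opt E p u.
Proof.
move=> h0 o0 hall.
have : forall s : seq 'I_n, exists x : vc_point R n, [/\ hi x, lp_opt E p x & forall i, i \in s -> intb (x i)].
  elim=> [|i s [x [hx ox sx]]]; first by exists x0.
  have [y [hy [oy iy]]] := hall i.
  have [oz hz] := comb hx hy ox oy.
  exists (zc x y); split => // j; rewrite inE => /orP[/eqP->|js].
  - by rewrite /zc; case: ifP.
  - by rewrite /zc (sx _ js); apply: sx.
move=> /(_ (enum 'I_n)) [u [hu ou su]]; exists u; split => // i.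
have := su i; rewrite mem_enum => /(_ isT); rewrite /intb.
by case/orP => /eqP; [left|right].
Qed.

Lemma delta_ge (a : \bar R) (z : R) : (z%:E <= a)%E -> (0 <= a - z%:E)%E.
Proof.
case: a => [r||] h //=; first by rewrite -EFinB lee_fin subr_ge0 -lee_fin.
by rewrite leey.
Qed.

Lemma delta_eq0 (a : \bar R) (z : R) : (a - z%:E = 0)%E -> a = z%:E.
Proof.
case: a => [r||] //=; rewrite -EFinB => -[] /eqP; rewrite subr_eq0 => /eqP ->.
by [].
Qed.

Lemma key p (x : vc_point R n) k : lp_opt E p x -> sb_choice E p x k -> (score R E p k <= 0)%E ->
  exists u : vc_point R n, integral u /\ lp_opt E p u.
Proof.
move=> ox [fk mk] sk.
have hp := lpval_opt ox.
have [x0 [h0 [f0 [o0 u0]]]] := round ox.1.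
have ox0 : lp_opt E p x0 by split => // y fy; apply: le_trans o0 _; exact: ox.2.
apply: (integral_opt h0 ox0) => i.
case: (boolP ((0 < x i) && (x i < 1))) => fr.
- have si : (score R E p i <= 0)%E by apply: le_trans (mk _ fr) sk.
  have g1 : (0 <= lpv ((i, true) :: p) - lpv p)%E.
    by rewrite hp; apply: delta_ge; rewrite -hp; exact: lpval_mono.
  have g0 : (0 <= lpv ((i, false) :: p) - lpv p)%E.
    by rewrite hp; apply: delta_ge; rewrite -hp; exact: lpval_mono.
  have s0 : score R E p i = 0%E.
    by apply/eqP; rewrite eq_le si /score mule_ge0.
  move: s0 => /eqP; rewrite /score mule_eq0 hp => /orP[/eqP/delta_eq0|/eqP/delta_eq0] hc.
  + have [y [oy [hy yi]]] := child_opt hp hc.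
    by exists y; do !split => //; rewrite /intb yi eqxx orbT.
  + have [y [oy [hy yi]]] := child_opt hp hc.
    by exists y; do !split => //; rewrite /intb yi eqxx.
- exists x0; split => //; split => //.
  have := (ox.1).1 i => /andP[a b].
  have xi : x i = 0 \/ x i = 1.
    move: fr; rewrite negb_and -!leNgt => /orP[c|c]; [left|right]; apply/eqP;
      rewrite eq_le; apply/andP; split => //.
  by rewrite u0 //; case: xi => ->; rewrite /intb eqxx ?orbT.
Qed.

End Attain.

Section BB.
Variables (R : realType) (n : nat) (E : rel 'I_n).
Local Notation feas := (@feasible R n E).
Local Notation lpv := (@lpval R n E).

Lemma ge_opt p (y : vc_point R n) : integral y -> feas p y -> (OPT R E <= (obj y)%:E)%E.
Proof. by move=> iy fy; apply: ereal_inf_lbound; exists y => //; split => //; exact: feas_nil fy. Qed.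

Definition bpt (f : {ffun 'I_n -> bool}) : vc_point R n := fun i => if f i then 1 else 0.

Lemma opt_attain : exists xs : vc_point R n,
  [/\ integral xs, feas [::] xs & OPT R E = (obj xs)%:E].
Proof.
have f1 : feas [::] (bpt [ffun=> true]).
  split; [|split].
  - by move=> i; rewrite /bpt ffunE; apply/andP; split; lra.
  - by move=> u v _; rewrite /bpt !ffunE; lra.
  - by [].
have [fm [pm mm]] := @fin_argmin R _ (fun f => feas [::] (bpt f)) (fun f => obj (bpt f))
  (ltac:(by exists [ffun=> true])).
have ib f : integral (bpt f) by move=> i; rewrite /bpt; case: (f i); [right|left].
exists (bpt fm); split => //.
apply/eqP; rewrite eq_le (@ge_opt [::]) //=; apply/ereal_infP => _ [y [fy iy] <-].
rewrite lee_fin.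
have -> : y = bpt [ffun i => y i == 1].
  apply: funext => i; rewrite /bpt ffunE; case: (iy i) => ->; by rewrite ?e01 ?eqxx.
apply: mm; have <- // : y = bpt [ffun i => y i == 1].
apply: funext => i; rewrite /bpt ffunE; case: (iy i) => ->; by rewrite ?e01 ?eqxx.
Qed.

Lemma le_bigmin (s : seq (vc_node n)) (f : vc_node n -> \bar R) c :
  (forall q, q \in s -> (c <= f q)%E) -> (c <= \big[Order.min/+oo%E]_(q <- s) f q)%E.
Proof.
elim: s => [|b s IH] h; first by rewrite big_nil leey.
rewrite big_cons le_min h ?mem_head //=; apply: IH => q qs; apply: h.
by rewrite inE qs orbT.
Qed.

Lemma bigmin_le (s : seq (vc_node n)) (f : vc_node n -> \bar R) a :
  a \in s -> (\big[Order.min/+oo%E]_(q <- s) f q <= f a)%E.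
Proof.
elim: s => // b s IH; rewrite inE big_cons => /orP[/eqP->|as_].
  by rewrite ge_min lexx.
by rewrite ge_min IH ?orbT.
Qed.

Lemma reach_ind (P : bb_state R n -> Prop) S S' :
  (forall a b, P a -> bb_step E a b -> P b) -> bb_reach E S S' -> P S -> P S'.
Proof. by move=> h; elim=> // a b c st _ IH pa; apply: IH; exact: h st. Qed.

Lemma notin_fixed p (x : vc_point R n) k : feas p x -> (0 < x k < 1) -> k \notin map fst p.
Proof.
move=> fx /andP[a b]; apply/mapP => -[[k' c] kin /= ek].
have := fx.2.2 _ kin; rewrite /= -ek; case: c kin => _ h; lra.
Qed.

Lemma score0 p k (b : bool) (z : R) : lpv p = z%:E -> lpv ((k, b) :: p) = z%:E ->
  score R E p k = 0%E.
Proof.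
move=> hp hc; rewrite /score hp.
by case: b hc => ->; rewrite subee // ?mul0e ?mule0.
Qed.

Lemma sel_facts (S : bb_state R n) p : selectable E S p -> p \in bb_open S /\
  forall q, q \in bb_open S -> (lpv p <= lpv q)%E /\ (lpv q = lpv p -> (size q <= size p)%N).
Proof. by []. Qed.

Definition inv0 (xs : vc_point R n) (S : bb_state R n) :=
  [/\ (OPT R E <= bb_inc S)%E,
      (forall q, q \in bb_open S -> uniq (map fst q)) &
      ((bb_inc S <= OPT R E)%E \/ exists2 q, q \in bb_open S & feas q xs)].

Lemma inv0_step xs S S' : integral xs -> feas [::] xs -> OPT R E = (obj xs)%:E ->
  inv0 xs S -> bb_step E S S' -> inv0 xs S'.
Proof.
move=> ixs fxs hopt inv st; case: st inv.
- move=> S0 p sel hinf [h1 h2 h3]; split => //=.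
  + by move=> q /mem_rem; exact: h2.
  + case: h3 => [l|[q qin fq]]; [by left|right].
    case: (eqVneq q p) => [eqp|neq].
    * have h := lpval_le fq; rewrite eqp hinf in h.
      by move: h; rewrite leNgt ltey.
    * by exists q => //; exact: rem_mem.
- move=> S0 p x sel ox ix [h1 h2 h3]; split => /=.
  + by rewrite le_min h1 (ge_opt ix ox.1).
  + by move=> q /mem_rem; exact: h2.
  + case: h3 => [l|[q qin fq]]; first by left; rewrite ge_min l.
    case: (eqVneq q p) => [eqp|neq].
    * left; rewrite ge_min; apply/orP; right; rewrite hopt lee_fin.
      by apply: ox.2; rewrite -eqp.
    * by right; exists q => //; exact: rem_mem.
- move=> S0 p x sel ox nix hlt [h1 h2 h3]; split => //=.
  + by move=> q /mem_rem; exact: h2.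
  + case: h3 => [l|[q qin fq]]; first by left.
    case: (eqVneq q p) => [eqp|neq].
    * left; rewrite hopt; apply: ltW; apply: (lt_le_trans hlt).
      by rewrite -eqp; exact: lpval_le.
    * by right; exists q => //; exact: rem_mem.
- move=> S0 p x j S1 [sel [ox [nix [hle [[fj _] ->]]]]] [h1 h2 h3]; split => //=.
  + move=> q; rewrite !inE => /orP[/eqP->|/orP[/eqP->|/mem_rem qin]];
      last exact: h2.
    * by rewrite /= (notin_fixed ox.1 fj) h2 //; exact: sel.1.
    * by rewrite /= (notin_fixed ox.1 fj) h2 //; exact: sel.1.
  + case: h3 => [l|[q qin fq]]; first by left.
    right; case: (eqVneq q p) => [eqp|neq].
    * exists ((j, xs j == 1) :: p).
        by case: (xs j == 1); rewrite !inE eqxx ?orbT.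
      apply: feas_consI; first by rewrite -eqp.
      by case: (ixs j) => ->; rewrite ?eqxx ?e01.
    * by exists q => //; rewrite !inE (rem_mem neq qin) !orbT.
Qed.

Lemma part1 (S S' : bb_state R n) N (x : vc_point R n) j :
  bb_reach E (bb_init R n) S -> branch_at E S N x j S' -> in_I R E N j ->
  exists xs, [/\ inv0 xs S, OPT R E = (obj x)%:E, dual_bound E S = OPT R E &
    exists u : vc_point R n, integral u /\ lp_opt E N u].
Proof.
move=> reach br inI.
have [xs [ixs fxs hopt]] := opt_attain.
have i0 : inv0 xs S.
  apply: (reach_ind (P := inv0 xs) _ reach).
    by move=> a b; apply: inv0_step.
  split => //=; first by rewrite leey.
    by move=> q; rewrite inE => /eqP->.
  by right; exists [::]; rewrite ?mem_head.
have [sel [ox [nix [hle [sbc _]]]]] := br.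
have hp := lpval_opt ox.
have [u [iu ou]] : exists u : vc_point R n, integral u /\ lp_opt E N u.
  apply: (key ox sbc).
  case: inI => y [oy hy].
  have oyx : obj y = obj x.
    by apply/le_anti; rewrite (oy.2 _ ox.1) (ox.2 _ oy.1).
  have hc : lpv ((j, y j == 1) :: N) = (obj x)%:E.
    apply/le_anti; rewrite -{2}hp lpval_mono andbT -oyx; apply: lpval_le.
    by apply: feas_consI oy.1 _; case: hy => ->; rewrite ?eqxx ?e01.
  by rewrite (score0 hp hc).
have hdual : dual_bound E S = lpv N.
  apply/le_anti; rewrite /dual_bound bigmin_le ?sel.1 //=.
  by apply: le_bigmin => q qin; exact: (sel.2 q qin).1.
have hN : lpv N = OPT R E.
  apply/le_anti/andP; split.
  - case: i0 => _ _ [l|[q qin fq]].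
    + exact: le_trans hle l.
    + apply: le_trans (sel.2 q qin).1 _; rewrite hopt; exact: lpval_le.
  - rewrite (lpval_opt ou); exact: ge_opt iu ou.1.
exists xs; split => //; first by rewrite -hN.
  by rewrite hdual.
by exists u.
Qed.

Definition good (z : R) (g : vc_node n) :=
  exists u : vc_point R n, [/\ integral u, feas g u & obj u = z].
Definition Pz (z : R) (d : nat) (q : vc_node n) : bool :=
  (lpv q == z%:E) && (d < size q)%N.
Definition inv2 (z : R) (d nbr0 : nat) (T : bb_state R n) :=
  [/\ (z%:E <= bb_inc T)%E,
      (forall q, q \in bb_open T -> (z%:E <= lpv q)%E /\ uniq (map fst q)) &
      (bb_inc T = z%:E \/ exists g, [/\ g \in bb_open T, good z g, (d < size g)%N &
         (bb_nbr T + count (Pz z d) (bb_open T) + 2 * d.+1 <= nbr0 + 2 + 2 * size g)%N])].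

Lemma good_lp z g : good z g -> (lpv g <= z%:E)%E.
Proof. by case=> u [_ fu <-]; exact: lpval_le. Qed.

Lemma inv2_step z d nbr0 (T T' : bb_state R n) :
  (forall y : vc_point R n, integral y -> feas [::] y -> z <= obj y) ->
  inv2 z d nbr0 T -> bb_step E T T' -> inv2 z d nbr0 T'.
Proof.
move=> hz [h1 h2 h3] st.
have selz : forall p, selectable E T p -> forall g, g \in bb_open T -> good z g ->
    lpv p = z%:E /\ (size g <= size p)%N.
  move=> p sel g gin gg.
  have hg : lpv g = z%:E by apply/le_anti; rewrite good_lp // (h2 g gin).1.
  have hpz : lpv p = z%:E.
    by apply/le_anti; rewrite (h2 p sel.1).1 andbT -hg (sel.2 g gin).1.
  by split => //; apply: (sel.2 g gin).2; rewrite hg hpz.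
move: h1 h2 h3 selz; case: st.
- move=> S0 p sel hinf h1 h2 h3 selz; split => //=.
  + by move=> q /mem_rem; exact: h2.
  + case: h3 => [l|[g [gin gg _ _]]]; first by left.
    by have [hpz _] := selz p sel g gin gg; rewrite hinf in hpz.
- move=> S0 p x sel ox ix h1 h2 h3 selz; split => /=.
  + by rewrite le_min h1 lee_fin hz //; exact: feas_nil ox.1.
  + by move=> q /mem_rem; exact: h2.
  + left; have hxz : (z%:E <= (obj x)%:E)%E by rewrite lee_fin hz //; exact: feas_nil ox.1.
    case: h3 => [l|[g [gin gg _ _]]].
    * by rewrite l; apply/le_anti; rewrite ge_min lexx le_min lexx hxz.
    * have [hpz _] := selz p sel g gin gg.
      have ox' := lpval_opt ox; rewrite hpz in ox'; rewrite -ox'.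
      by apply/le_anti; rewrite ge_min lexx orbT le_min lexx h1.
- move=> S0 p x sel ox nix hlt h1 h2 h3 selz; split => //=.
  + by move=> q /mem_rem; exact: h2.
  + case: h3 => [l|[g [gin gg _ _]]]; first by left.
    have [hpz _] := selz p sel g gin gg.
    by move: hlt; rewrite hpz ltNge h1.
- move=> S0 p x k S1 [sel [ox [nix [hle [sbc ->]]]]] h1 h2 h3 selz.
  have fk := sbc.1; split => //=.
  + move=> q; rewrite !inE => /orP[/eqP->|/orP[/eqP->|/mem_rem qin]];
      last exact: h2.
    * split; first by apply: le_trans (h2 p sel.1).1 _; exact: lpval_mono.
      by rewrite /= (notin_fixed ox.1 fk) (h2 p sel.1).2.
    * split; first by apply: le_trans (h2 p sel.1).1 _; exact: lpval_mono.
      by rewrite /= (notin_fixed ox.1 fk) (h2 p sel.1).2.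
  + case: h3 => [l|[g [gin gg dg cnt]]]; first by left.
    right; have [hpz hgp] := selz p sel g gin gg.
    have Pp : Pz z d p by rewrite /Pz hpz eqxx (leq_trans dg hgp).
    have hcnt : count (Pz z d) (bb_open S0) = (count (Pz z d) (rem p (bb_open S0))).+1.
      by rewrite (permP (perm_to_rem sel.1)) /= Pp.
    case: (pselect (good z p)) => [[u [iu fu ou]] | ngp].
    * exists ((k, u k == 1) :: p); split.
      - by case: (u k == 1); rewrite !inE eqxx ?orbT.
      - exists u; split => //; apply: feas_consI fu _.
        by case: (iu k) => ->; rewrite ?eqxx ?e01.
      - by rewrite /= ltnS (leq_trans (ltnW dg) hgp).
      - rewrite /=; move: cnt; rewrite hcnt.
        move: (Pz z d ((k, false) :: p)) (Pz z d ((k, true) :: p)) => b0 b1.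
        move: hgp; set sg := size g; set sp := size p => hgp.
        by case: b0; case: b1 => /=; lia.
    * have spos : (0 < score R E p k)%E.
        rewrite ltNge; apply/negP => sk; apply: ngp.
        have [u [iu ou]] := key ox sbc sk.
        exists u; split => //; first exact: ou.1.
        by have := lpval_opt ou; rewrite hpz => -[->].
      have nc b : Pz z d ((k, b) :: p) = false.
        rewrite /Pz; case: eqP => // hc; exfalso; move: spos.
        by rewrite (score0 hpz hc) ltxx.
      exists g; split => //.
      - have gp : g != p by apply/eqP => e; apply: ngp; rewrite -e.
        by rewrite !inE (rem_mem gp gin) !orbT.
      - rewrite /= !nc /=; move: cnt; rewrite hcnt; set sg := size g; lia.
Qed.

Lemma inv2_final z d nbr0 (T : bb_state R n) : inv2 z d nbr0 T ->
  ((2 * n.+1 < bb_nbr T - nbr0)%N \/ bb_open T = [::]) -> bb_inc T = z%:E.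
Proof.
case=> h1 h2 [//|[g [gin gg dg cnt]]] hc.
have sg : (size g <= n)%N.
  have u := (h2 g gin).2.
  rewrite -(size_map fst) -(card_uniqP u).
  by rewrite -[X in (_ <= X)%N]card_ord max_card.
case: hc => [hc|ho]; last by rewrite ho in gin.
exfalso; lia.
Qed.

Lemma inv2_init xs (S S' : bb_state R n) N (x : vc_point R n) j (u : vc_point R n) :
  inv0 xs S -> branch_at E S N x j S' -> OPT R E = (obj x)%:E ->
  integral u -> lp_opt E N u -> inv2 (obj x) (size N) (bb_nbr S') S'.
Proof.
move=> [h1 h2 h3] [sel [ox [nix [hle [sbc ->]]]]] hopt iu ou.
have fj := sbc.1.
have hp := lpval_opt ox.
split => /=.
- by rewrite -hopt.
- move=> q; rewrite !inE => /orP[/eqP->|/orP[/eqP->|/mem_rem qin]].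
  + split; first by rewrite -hp; exact: lpval_mono.
    by rewrite /= (notin_fixed ox.1 fj) h2 //; exact: sel.1.
  + split; first by rewrite -hp; exact: lpval_mono.
    by rewrite /= (notin_fixed ox.1 fj) h2 //; exact: sel.1.
  + by split; [rewrite -hp; exact: (sel.2 q qin).1 | exact: h2].
- right; exists ((j, u j == 1) :: N); split.
  + by case: (u j == 1); rewrite !inE eqxx ?orbT.
  + exists u; split => //.
      apply: feas_consI ou.1 _.
      by case: (iu j) => ->; rewrite ?eqxx ?e01.
    by apply/le_anti; rewrite (ou.2 _ ox.1) (ox.2 _ ou.1).
  + by rewrite /=.
  + have c0 : count (Pz (obj x) (size N)) (rem N (bb_open S)) = 0%N.
      apply/eqP; rewrite -leqn0 leqNgt -has_count; apply/hasPn => q /mem_rem qin.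
      rewrite /Pz; apply/negP => /andP[/eqP hq hs].
      have := (sel.2 q qin).2; rewrite hq hp => /(_ erefl).
      by rewrite leqNgt hs.
    rewrite /= c0.
    move: (Pz (obj x) (size N) ((j, false) :: N)) (Pz (obj x) (size N) ((j, true) :: N)) => b0 b1.
    by case: b0; case: b1 => /=; lia.
Qed.

End BB.

Theorem proposition2p2 :
  exists C : nat,
  forall (R : realType) (n : nat) (E : rel 'I_n),
    symmetric E -> irreflexive E ->
    forall (S S' : bb_state R n) (N : vc_node n) (x : vc_point R n) (j : 'I_n),
      bb_reach E (bb_init R n) S ->
      branch_at E S N x j S' ->
      in_I R E N j ->
      dual_bound E S = OPT R E /\
      (forall S'' : bb_state R n, bb_reach E S' S'' ->
         (C * n.+1 < bb_nbr S'' - bb_nbr S')%N \/ bb_open S'' = [::] ->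
         bb_inc S'' = OPT R E).
Proof.
exists 2 => R n E _ _ S S' N x j reach br inI.
have [xs [i0 hopt hdual [u [iu ou]]]] := part1 reach br inI.
split => // S'' r2 hc.
have hz : forall y : vc_point R n, integral y -> feasible E [::] y -> obj x <= obj y.
  by move=> y iy fy; rewrite -lee_fin -hopt; exact: ge_opt iy fy.
have i2 := inv2_init i0 br hopt iu ou.
have i2' := reach_ind (P := inv2 E (obj x) (size N) (bb_nbr S'))
  (fun a b => @inv2_step R n E _ _ _ a b hz) r2 i2.
by rewrite hopt; exact: inv2_final i2' hc.
Qed.
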